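(* Let $k$ be a field of characteristic zero, $h_0\in k\setminus\{0\}$, $\sigma\in\mathrm{Aut}_k(k[h])$ given by $\sigma(h)=h-h_0$, and let $a\in k[h]$ be a polynomial of degree $n>2$ which is reflective, i.e. there is $\rho\in k$ with $a(\rho-h)=(-1)^n a(h)$. Let $A=A(k[h],a,\sigma)$ be the generalized Weyl algebra and let $\Omega$ be the automorphism of $A$ with $\Omega(x)=y$, $\Omega(y)=(-1)^n x$, $\Omega(h)=h_0+\rho-h$. Let $\mathcal G\subset\mathrm{Aut}_k(A)$ be the subgroup generated by the torus automorphisms $\theta_w$ ($w\in k^*$) and the exponential automorphisms $\exp(\lambda\,\mathrm{ad}(x^m))$ and $\exp(\lambda\,\mathrm{ad}(y^m))$ for $\lambda\in k$, $m\geq 1$. Then $\Omega\notin\mathcal G$.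
   Context: For a $k$-algebra $R$, a central element $a\in R$ and $\sigma\in\mathrm{Aut}_k(R)$, the generalized Weyl algebra $A(R,a,\sigma)$ is the $k$-algebra generated by $R$ and two new variables $x,y$ subject to the relations $yx=a$, $xy=\sigma(a)$, $xr=\sigma(r)x$ and $ry=y\sigma(r)$ for all $r\in R$. For $w\in k^*$, $\theta_w$ is the automorphism of $A$ with $\theta_w(x)=wx$, $\theta_w(y)=w^{-1}y$, $\theta_w(h)=h$. For $u\in A$, $\mathrm{ad}(u)(b)=ub-bu$; the derivations $\mathrm{ad}(x^m)$ and $\mathrm{ad}(y^m)$ are locally nilpotent on $A$, so $\exp(\lambda\,\mathrm{ad}(u))=\sum_{i\geq0}\frac{\lambda^i}{i!}\mathrm{ad}(u)^i$ is a well-defined automorphism for $u=x^m$ or $u=y^m$. *)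

(* Defs.v *)
From HB Require Import structures.
From mathcomp Require Import all_boot all_order all_algebra.
Set Implicit Arguments. Unset Strict Implicit. Unset Printing Implicit Defensive.
Import GRing.Theory.
Local Open Scope ring_scope.

(* The generalized Weyl algebra A = A(k[h], a, sigma), sigma(h) = h - h0,
   is described by its defining presentation: a k-algebra A with elements
   hA (the image of h), xA, yA satisfying the GWA relations and initial among
   all such data (universal property of "generated by ... subject to ..."). *)

Section GWA.
Variable k : fieldType.

Definition sigma_h (h0 : k) (p : {poly k}) : {poly k} := p \Po ('X - h0%:P).

Definition polyA (A : algType k) (hA : A) (p : {poly k}) : A := horner_alg hA p.

Definition alg_hom (A B : algType k) (f : A -> B) : Prop :=
  [/\ f 1 = 1, forall u v, f (u + v) = f u + f v,
      forall u v, f (u * v) = f u * f v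
    & forall (c : k) u, f (c *: u) = c *: f u].

Definition gwa_rel (h0 : k) (a : {poly k}) (B : algType k) (hB xB yB : B) : Prop :=
  [/\ yB * xB = polyA hB a, xB * yB = polyA hB (sigma_h h0 a),
      forall r, xB * polyA hB r = polyA hB (sigma_h h0 r) * xB
    & forall r, polyA hB r * yB = yB * polyA hB (sigma_h h0 r)].

Definition is_gwa (h0 : k) (a : {poly k}) (A : algType k) (hA xA yA : A) : Prop :=
  gwa_rel h0 a hA xA yA /\
  forall (B : algType k) (hB xB yB : B), gwa_rel h0 a hB xB yB ->
    (exists f : A -> B, [/\ alg_hom f, f hA = hB, f xA = xB & f yA = yB]) /\
    (forall f g : A -> B, alg_hom f -> alg_hom g ->
       f hA = g hA -> f xA = g xA -> f yA = g yA -> f =1 g).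

Definition ad (A : algType k) (u b : A) : A := u * b - b * u.

Definition is_exp_ad (A : algType k) (lam : k) (u : A) (s : A -> A) : Prop :=
  forall b : A, exists N : nat, iter N (ad u) b = 0 /\
    s b = \sum_(i < N) ((lam ^+ i) / (i`!)%:R) *: iter i (ad u) b.

Definition is_theta (A : algType k) (hA xA yA : A) (s : A -> A) : Prop :=
  exists w : k, [/\ w != 0, alg_hom s, s xA = w *: xA, s yA = w^-1 *: yA & s hA = hA].

Definition gwa_gen (A : algType k) (hA xA yA : A) (s : A -> A) : Prop :=
  is_theta hA xA yA s \/
  exists (lam : k) (m : nat), (0 < m)%N /\
    (is_exp_ad lam (xA ^+ m) s \/ is_exp_ad lam (yA ^+ m) s).

End GWA.

Inductive in_gen_group (T : Type) (gen : (T -> T) -> Prop) : (T -> T) -> Prop :=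
| gg_id : in_gen_group gen id
| gg_gen : forall s g, gen s -> in_gen_group gen g -> in_gen_group gen (s \o g)
| gg_inv : forall s s' g, gen s -> cancel s s' -> cancel s' s ->
    in_gen_group gen g -> in_gen_group gen (s' \o g).

(* Main.v *)
Require Import Defs.
From HB Require Import structures.
From mathcomp Require Import all_boot all_order all_algebra.
From mathcomp Require Import boolp.
From mathcomp Require Import ring zify.
Import Order.TTheory GRing.Theory Num.Theory.
Set Implicit Arguments. Unset Strict Implicit. Unset Printing Implicit Defensive.
Local Open Scope ring_scope.

Section PolyPart.
Variable k : fieldType.
Variable h0 : k.
Hypothesis Hc : [pchar k] =i pred0.
Hypothesis Hh0 : h0 != 0.

Lemma natr_neq0 (n : nat) : (n > 0)%N -> n%:R != 0 :> k.
Proof. by move=> n0; have /pcharf0P -> := Hc; rewrite -lt0n. Qed.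

Lemma natr_injk : injective (fun n : nat => n%:R : k).
Proof.
have H m n : (m <= n)%N -> m%:R = n%:R :> k -> m = n.
  move=> le e; apply/eqP; rewrite eqn_leq le /=.
  have: (n - m)%N%:R == 0 :> k by rewrite natrB // e subrr.
  have /pcharf0P -> := Hc; by rewrite subn_eq0.
move=> m n /= e; case: (leqP m n) => le; first exact: H.
by apply/esym/H => //; apply: ltnW.
Qed.

Lemma poly_pts0 (e : k) (p : {poly k}) : e != 0 ->
  (forall i : nat, p.[i%:R * e] = 0) -> p = 0.
Proof.
move=> e0 H; apply/eqP; apply/negPn/negP => p0.
set rs := [seq i%:R * e | i <- iota 0 (size p)].
have Hall : all (root p) rs by apply/allP => x /mapP [i _ ->]; rewrite /root H.
have Hu : uniq rs.
  rewrite map_inj_uniq ?iota_uniq // => i j /(mulIf e0); exact: natr_injk.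
by have := max_poly_roots p0 Hall Hu; rewrite size_map size_iota ltnn.
Qed.

Definition Dl (F : {poly k}) := F \Po ('X - h0%:P) - F.

Lemma hornerDl F x : (Dl F).[x] = F.[x - h0] - F.[x].
Proof. by rewrite /Dl hornerD hornerN horner_comp hornerXsubC. Qed.

Lemma DlD F G : Dl (F + G) = Dl F + Dl G.
Proof. by rewrite /Dl comp_polyD opprD addrACA. Qed.

Lemma DlZ c F : Dl (c *: F) = c *: Dl F.
Proof. by rewrite /Dl comp_polyZ scalerBr. Qed.

Lemma Dl_ker G : Dl G = 0 -> G = (G.[0])%:P.
Proof.
move=> H; apply/eqP; rewrite -subr_eq0; apply/eqP.
apply: (@poly_pts0 (- h0)); first by rewrite oppr_eq0.
have E x : G.[x - h0] = G.[x] by apply/eqP; rewrite -subr_eq0 -hornerDl H horner0.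
move=> i; rewrite hornerD hornerN hornerC; apply/eqP; rewrite subr_eq0; apply/eqP.
induction i as [|i IH]; first by rewrite mul0r.
by rewrite -natr1 mulrDl mul1r -[_ + - h0]/(_ - h0) E.
Qed.

Definition Pm (m : nat) : {poly k} := \prod_(0 <= j < m) ('X - (- (j%:R * h0))%:P).

Lemma Pm_monic m : Pm m \is monic.
Proof. exact: monic_prod_XsubC. Qed.

Lemma size_Pm m : size (Pm m) = m.+1.
Proof. by rewrite /Pm size_prod_XsubC size_iota subn0. Qed.

Lemma comp_Pm m : Pm m \Po ('X - h0%:P) =
  \prod_(0 <= j < m) ('X - (- ((j%:R - 1) * h0))%:P).
Proof.
rewrite /Pm (big_morph (fun p => p \Po ('X - h0%:P)) (fun p q => comp_polyM p q _) (comp_polyC _ _)).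
apply: eq_bigr => j _; rewrite comp_polyB comp_polyX comp_polyC; ring.
Qed.

Lemma Dl_Pm m : Dl (Pm m.+1) = (-(m.+1%:R * h0)) *: Pm m.
Proof.
rewrite /Dl comp_Pm big_nat_recl // [Pm m.+1]/Pm big_nat_recr //=.
rewrite -/(Pm m).
have -> : \prod_(0 <= i < m) ('X - (- (((i.+1)%:R - 1) * h0))%:P) = Pm m.
  by apply: eq_bigr => i _; rewrite -natr1 addrK.
rewrite -mul_polyC; ring.
Qed.

Lemma Dl_surj p : exists F, Dl F = p.
Proof.
move: {2}(size p) (leqnn (size p)) => s; elim: s p => [|s IH] p Hs.
  by exists 0; move: Hs; rewrite leqn0 size_poly_eq0 => /eqP ->; rewrite /Dl comp_poly0 subrr.
case: (leqP (size p) s) => Hps; first exact: IH.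
have Hp : size p = s.+1 by apply/eqP; rewrite eqn_leq Hs Hps.
set c := lead_coef p.
set q := p - c *: Pm s.
have Hq : (size q <= s)%N.
  have Hq1 : (size q <= s.+1)%N.
    rewrite /q; apply: (leq_trans (size_polyD _ _)); rewrite geq_max Hs /=.
    by rewrite size_polyN; apply: (leq_trans (size_scale_leq _ _)); rewrite size_Pm.
  case: (ltngtP (size q) s.+1) Hq1 => // Hsq _.
  have : q`_s = 0.
    rewrite /q coefB coefZ.
    have := Pm_monic s; rewrite monicE /lead_coef size_Pm /= => /eqP ->.
    by rewrite mulr1 /c /lead_coef Hp subrr.
  move=> qs; have : lead_coef q = 0 by rewrite /lead_coef Hsq.
  by move/eqP; rewrite lead_coef_eq0 => /eqP q0; move: Hsq; rewrite q0 size_poly0.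
have [F' HF'] := IH q Hq.
have nz : (-(s.+1%:R * h0)) != 0.
  by rewrite oppr_eq0 mulf_neq0 // natr_neq0.
exists (F' + (c / (-(s.+1%:R * h0))) *: Pm s.+1).
rewrite DlD DlZ Dl_Pm HF' scalerA divfK // /q; ring.
Qed.


Definition shz (z : int) (p : {poly k}) := p \Po ('X - (z%:~R * h0)%:P).

Lemma shz_eval z p x : (shz z p).[x] = p.[x - z%:~R * h0].
Proof. by rewrite /shz horner_comp hornerXsubC. Qed.

Lemma shzA l m p : shz l (shz m p) = shz (l + m) p.
Proof.
rewrite /shz -comp_polyA comp_polyB comp_polyX comp_polyC rmorphD /=; congr (_ \Po _).
rewrite mulrDl polyCD; ring.
Qed.

Lemma shz0 p : shz 0 p = p.
Proof. by rewrite /shz mul0r subr0 comp_polyXr. Qed.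

Lemma shzM z p q : shz z (p * q) = shz z p * shz z q.
Proof. exact: comp_polyM. Qed.

Lemma shzD z p q : shz z (p + q) = shz z p + shz z q.
Proof. exact: comp_polyD. Qed.

Lemma shzZ z c p : shz z (c *: p) = c *: shz z p.
Proof. exact: comp_polyZ. Qed.

Lemma DlE p : Dl p = shz 1 p - p.
Proof. by rewrite /Dl /shz mul1r. Qed.

Variable a : {poly k}.
Hypothesis Ha : (3 < size a)%N.

Lemma Dl_surjb p : exists F, Dl F == p.
Proof. by have [F HF] := Dl_surj p; exists F; apply/eqP. Qed.

Definition antid p := xchoose (Dl_surjb p).
Definition Lmap p := ((antid p) %% a)`_2.

Lemma antidP p : Dl (antid p) = p.
Proof. exact/eqP/(xchooseP (Dl_surjb p)). Qed.

Lemma DlN F : Dl (- F) = - Dl F.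
Proof. by rewrite -scaleN1r DlZ scaleN1r. Qed.

Lemma L_spec F p : Dl F = p -> Lmap p = (F %% a)`_2.
Proof.
move=> HF.
have : Dl (F - antid p) = 0 by rewrite DlD DlN antidP HF subrr.
move/Dl_ker => E.
have -> : F = antid p + (F - antid p).[0]%:P by rewrite -E addrC subrK.
rewrite modpD (@modp_small _ _%:P) ?coefD ?coefC ?addr0 //.
by apply: (leq_ltn_trans (size_polyC_leq1 _)); apply: ltn_trans Ha.
Qed.

Lemma LD p q : Lmap (p + q) = Lmap p + Lmap q.
Proof.
rewrite (@L_spec (antid p + antid q)) ?DlD ?antidP //.
by rewrite modpD coefD.
Qed.

Lemma LZ c p : Lmap (c *: p) = c * Lmap p.
Proof.
rewrite (@L_spec (c *: antid p)) ?DlZ ?antidP //.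
by rewrite modpZl coefZ.
Qed.

Lemma LN p : Lmap (- p) = - Lmap p.
Proof. by rewrite -scaleN1r LZ mulN1r. Qed.

Lemma LB p q : Lmap (p - q) = Lmap p - Lmap q.
Proof. by rewrite LD LN. Qed.

Lemma L_Dl_dvd G : a %| G -> Lmap (Dl G) = 0.
Proof.
case/dvdpP => q ->; rewrite (@L_spec (q * a)) //.
by rewrite modp_mull coef0.
Qed.

Lemma L1 : Lmap 1 = 0.
Proof.
have H : Lmap (Dl 'X) = 0.
  rewrite (@L_spec 'X) // modp_small ?coefX //.
  by rewrite size_polyX; apply: ltn_trans Ha.
have E : Dl 'X = (- h0) *: 1.
  by rewrite /Dl comp_polyX -mul_polyC; ring.
move: H; rewrite E LZ => /eqP; rewrite mulf_eq0 oppr_eq0 (negbTE Hh0) /=.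
by move/eqP.
Qed.

Lemma LX : Lmap 'X != 0.
Proof.
have H : Lmap (Dl (- 'X^2)) = -1.
  rewrite (@L_spec (- 'X^2)) // modp_small ?coefN ?coefXn //.
  by rewrite size_polyN size_polyXn.
have E : Dl (- 'X^2) = (h0 *+ 2) *: 'X - (h0 ^+ 2) *: 1.
  rewrite DlN /Dl expr2 comp_polyM comp_polyX -!mul_polyC; ring.
move: H; rewrite E LB !LZ L1 mulr0 subr0 => H.
apply/eqP => H0; move: H; rewrite H0 mulr0 => /eqP; rewrite eq_sym oppr_eq0.
by rewrite oner_eq0.
Qed.

Lemma L_shift (m : nat) G : (forall l : nat, (l < m)%N -> a %| shz l%:Z G) ->
  Lmap (shz m%:Z G) = Lmap G.
Proof.
induction m as [|m IH] => H; first by rewrite shz0.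
have -> : shz m.+1%:Z G = Dl (shz m%:Z G) + shz m%:Z G.
  by rewrite DlE shzA subrK intS.
by rewrite LD L_Dl_dvd ?H // add0r IH // => l lm; apply: H; apply: ltnW.
Qed.

End PolyPart.

Section SumLemmas.
Variable k : fieldType.

Lemma sum_delta (s : seq int) (F : int -> k) x : uniq s -> (x \notin s -> F x = 0) ->
  \sum_(d <- s) F d * (d == x)%:R = F x.
Proof.
elim: s => [|y s IH] /=; first by rewrite big_nil => _ /(_ isT).
case/andP=> ys us Hx; rewrite big_cons.
case: (eqVneq y x) => [<-|yx].
  rewrite mulr1 big1_seq ?addr0 // => d /andP [_ ds].
  have -> : (d == y) = false by apply/eqP => dy; move: ys; rewrite -dy ds.
  by rewrite mulr0.
rewrite mulr0 add0r IH // => xs; apply: Hx; rewrite inE negb_or xs andbT.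
by rewrite eq_sym.
Qed.

Lemma sum_sub (s t : seq int) (F : int -> k) : uniq s -> uniq t -> {subset s <= t} ->
  (forall d, d \notin s -> F d = 0) -> \sum_(d <- t) F d = \sum_(d <- s) F d.
Proof.
move=> us ut st Hz.
rewrite (bigID (fun d => d \in s)) /= [X in _ + X]big1 ?addr0; last first.
  by move=> d /Hz.
rewrite -big_filter; apply: perm_big; apply: uniq_perm => //.
  exact: filter_uniq.
by move=> x; rewrite mem_filter; case: (boolP (x \in s)) => // /st ->.
Qed.

End SumLemmas.

Section OpPart.
Variable k : fieldType.
Variable h0 : k.
Variable a : {poly k}.

Definition V := int -> k.
Definition pt (i : int) : k := i%:~R * h0.
Definition dlt (j : int) : V := fun i => (i == j)%:R.

Lemma ptD i d : pt (i + d) = pt i + d%:~R * h0.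
Proof. by rewrite /pt intrD mulrDl. Qed.

Lemma horner_shzN (p : {poly k}) d i : (shz h0 (- d) p).[pt i] = p.[pt (i + d)].
Proof. by rewrite shz_eval ptD mulrNz mulNr opprK. Qed.

Definition band (T : V -> V) : Prop :=
  exists (D : seq int) (c : int -> {poly k}),
   [/\ uniq D, forall d, d \notin D -> c d = 0,
       forall f i, T f i = \sum_(d <- D) (c d).[pt i] * f (i + d)
     & forall d l : int, 0 <= l -> l < d -> a %| shz h0 l (c d)].

Lemma shz_0 z : shz h0 z 0 = 0.
Proof. by rewrite /shz comp_poly0. Qed.

Lemma band_add T f g : band T -> T (fun i => f i + g i) = (fun i => T f i + T g i).
Proof.
case=> D [c [_ _ HT _]]; apply: funext => i; rewrite !HT -big_split /=.
by apply: eq_bigr => d _; rewrite mulrDr.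
Qed.

Lemma band_scal T s f : band T -> T (fun i => s * f i) = (fun i => s * T f i).
Proof.
case=> D [c [_ _ HT _]]; apply: funext => i; rewrite !HT mulr_sumr.
by apply: eq_bigr => d _; rewrite mulrCA.
Qed.

Lemma band_kernel T D c : uniq D -> (forall d, d \notin D -> c d = 0) ->
  (forall f i, T f i = \sum_(d <- D) (c d).[pt i] * f (i + d)) ->
  forall j i, T (dlt j) i = (c (j - i)).[pt i].
Proof.
move=> uD zD HT j i; rewrite HT.
rewrite (eq_bigr (fun d => (c d).[pt i] * (d == j - i)%:R)); last first.
  move=> d _; rewrite /dlt.
  have -> : (i + d == j) = (d == j - i).
    by apply/eqP/eqP => [<-|->]; [rewrite addrC addKr | rewrite addrC subrK].
  done.
by rewrite (@sum_delta _ D (fun d => (c d).[pt i])) // => /zD ->; rewrite horner0.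
Qed.

Definition Mop (p : {poly k}) : V -> V := fun f i => p.[pt i] * f i.

Lemma bandM p : band (Mop p).
Proof.
exists [:: 0], (fun d => if d == 0 then p else 0); split => //.
- by move=> d; rewrite inE => /negbTE ->.
- by move=> f i; rewrite big_seq1 eqxx addr0.
- move=> d l l0 ld; have /negbTE -> : d != 0.
    by apply/eqP => d0; move: (le_lt_trans l0 ld); rewrite d0 ltxx.
  by rewrite shz_0 dvdp0.
Qed.

Definition Xop : V -> V := fun f i => f (i - 1).

Lemma bandX : band Xop.
Proof.
exists [:: -1], (fun d => if d == -1 then 1 else 0); split => //.
- by move=> d; rewrite inE => /negbTE ->.
- by move=> f i; rewrite big_seq1 eqxx hornerC mul1r.
- move=> d l l0 ld; have /negbTE -> : d != -1.
    by apply/eqP => d0; move: (le_lt_trans l0 ld); rewrite d0.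
  by rewrite shz_0 dvdp0.
Qed.

Definition Yop : V -> V := fun f i => a.[pt i] * f (i + 1).

Lemma bandY : band Yop.
Proof.
exists [:: 1], (fun d => if d == 1 then a else 0); split => //.
- by move=> d; rewrite inE => /negbTE ->.
- by move=> f i; rewrite big_seq1 eqxx.
- move=> d l l0 ld; case: eqP => [d1|_]; last by rewrite shz_0 dvdp0.
  have -> : l = 0 by apply/eqP; rewrite eq_le l0 andbT -ltzD1 add0r -d1.
  by rewrite shz0.
Qed.

Lemma bandD T U : band T -> band U -> band (fun f i => T f i + U f i).
Proof.
case=> D [c [uD zD HT dT]]; case=> D' [c' [uD' zD' HU dU]].
exists (undup (D ++ D')), (fun d => c d + c' d); split.
- exact: undup_uniq.
- by move=> d; rewrite mem_undup mem_cat negb_or => /andP [/zD -> /zD' ->]; rewrite addr0.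
- move=> f i; rewrite HT HU.
  rewrite -(@sum_sub _ D (undup (D ++ D')) (fun d => (c d).[pt i] * f (i + d))) ?undup_uniq //; last 2 first.
  + by move=> x xD; rewrite mem_undup mem_cat xD.
  + by move=> d /zD ->; rewrite horner0 mul0r.
  rewrite -(@sum_sub _ D' (undup (D ++ D')) (fun d => (c' d).[pt i] * f (i + d))) ?undup_uniq //; last 2 first.
  + by move=> x xD; rewrite mem_undup mem_cat xD orbT.
  + by move=> d /zD' ->; rewrite horner0 mul0r.
  by rewrite -big_split /=; apply: eq_bigr => d _; rewrite hornerD mulrDl.
- by move=> d l l0 ld; rewrite shzD dvdp_add ?dT ?dU.
Qed.

Lemma bandZ s T : band T -> band (fun f i => s * T f i).
Proof.
case=> D [c [uD zD HT dT]].
exists D, (fun d => s *: c d); split => //.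
- by move=> d /zD ->; rewrite scaler0.
- move=> f i; rewrite HT mulr_sumr; apply: eq_bigr => d _.
  by rewrite hornerZ mulrA.
- by move=> d l l0 ld; rewrite shzZ -mul_polyC dvdp_mull ?dT.
Qed.

Lemma bandN T : band T -> band (fun f i => - T f i).
Proof.
move=> /(bandZ (-1)) H.
have -> : (fun f i => - T f i) = (fun f i => -1 * T f i) :> (V -> V).
  by apply: funext => f; apply: funext => i; rewrite mulN1r.
exact: H.
Qed.

Lemma band0 : band (fun f i => 0).
Proof.
exists [::], (fun d => 0); split => //.
- by move=> f i; rewrite big_nil.
- by move=> d l _ _; rewrite shz_0 dvdp0.
Qed.


Lemma shz_sum (I : Type) (r : seq I) (F : I -> {poly k}) z :
  shz h0 z (\sum_(x <- r) F x) = \sum_(x <- r) shz h0 z (F x).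
Proof. exact: (big_morph _ (shzD h0 z) (shz_0 z)). Qed.

Lemma dvdp_sum (I : Type) (r : seq I) (F : I -> {poly k}) :
  (forall x, a %| F x) -> a %| \sum_(x <- r) F x.
Proof.
move=> H; apply: (big_ind (fun p => a %| p)); [exact: dvdp0 | exact: dvdp_add | by move=> x _].
Qed.

Lemma bandC T U : band T -> band U -> band (fun f => T (U f)).
Proof.
case=> D [c [uD zD HT dT]]; case=> D' [c' [uD' zD' HU dU]].
pose D2 := undup [seq d + d' | d <- D, d' <- D'].
pose c2 := fun e => \sum_(d <- D) \sum_(d' <- D')
   ((d + d' == e)%:R *: (c d * shz h0 (- d) (c' d'))).
have memD2 d d' : d \in D -> d' \in D' -> d + d' \in D2.
  by move=> dD dD'; rewrite mem_undup; apply: allpairs_f.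
exists D2, c2; split.
- exact: undup_uniq.
- move=> e eD; apply: big1_seq => d /andP [_ dD]; apply: big1_seq => d' /andP [_ dD'].
  have /negbTE -> : d + d' != e by apply/eqP => E; move: eD; rewrite -E memD2.
  by rewrite scale0r.
- move=> f i; rewrite HT.
  under eq_bigr => d _ do rewrite HU mulr_sumr.
  symmetry; rewrite /c2 /=.
  under eq_bigr => e _ do rewrite horner_sum mulr_suml.
  rewrite exchange_big /=; apply: eq_big_seq => d dD.
  under eq_bigr => e _ do rewrite horner_sum mulr_suml.
  rewrite exchange_big /=; apply: eq_big_seq => d' dD'.
  under eq_bigr => e _ do rewrite hornerZ hornerM horner_shzN [(_ == _)]eq_sym.
  rewrite (eq_bigr (fun e => f (i + e) * ((c d).[pt i] * (c' d').[pt (i + d)]) * (e == d + d')%:R)); last first.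
    by move=> e _; ring.
  rewrite (@sum_delta _ D2 (fun e => f (i + e) * ((c d).[pt i] * (c' d').[pt (i + d)])) (d + d')).
  + by rewrite addrA mulrC mulrA.
  + exact: undup_uniq.
  + by rewrite memD2.
- move=> e l l0 le; rewrite /c2 shz_sum; apply: dvdp_sum => d.
  rewrite shz_sum; apply: dvdp_sum => d'.
  case: eqP => [E|_]; last by rewrite scale0r shz_0 dvdp0.
  rewrite scale1r shzM shzA.
  case: (ltP l d) => [ld | dl]; first by apply: dvdp_mulr; exact: dT.
  apply: dvdp_mull; apply: dU; lia.
Qed.


Definition Psi (w : k) (T : V -> V) : V -> V :=
  fun f i => w ^ i * T (fun j => w ^ (- j) * f j) i.

Lemma wexp (w : k) (i d : int) : w != 0 -> w ^ i * w ^ (- (i + d)) = w ^ (- d).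
Proof. by move=> w0; rewrite -expfzDr // opprD addrA subrr add0r. Qed.

Lemma bandPsi w T : w != 0 -> band T -> band (Psi w T).
Proof.
move=> w0; case=> D [c [uD zD HT dT]].
exists D, (fun d => w ^ (- d) *: c d); split => //.
- by move=> d /zD ->; rewrite scaler0.
- move=> f i; rewrite /Psi HT mulr_sumr; apply: eq_bigr => d _.
  by rewrite hornerZ -(wexp i d w0); ring.
- by move=> d l l0 ld; rewrite shzZ -mul_polyC dvdp_mull ?dT.
Qed.

End OpPart.

Section BAlg.
Variable k : fieldType.
Variable h0 : k.
Variable a : {poly k}.

Record Bt := MkB { op : V k -> V k; opP : band h0 a op }.

HB.instance Definition _ := gen_eqMixin Bt.
HB.instance Definition _ := gen_choiceMixin Bt.

Lemma opK (u v : Bt) : op u = op v -> u = v.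
Proof.
case: u => fu pu; case: v => fv pv /= E; subst fv.
by congr MkB; apply: Prop_irrelevance.
Qed.

Lemma opE (u v : Bt) : (forall f i, op u f i = op v f i) -> u = v.
Proof. by move=> H; apply: opK; apply: funext => f; apply: funext => i; apply: H. Qed.

Definition B0 := MkB (band0 h0 a).
Definition Badd (u v : Bt) := MkB (bandD (opP u) (opP v)).
Definition Bopp (u : Bt) := MkB (bandN (opP u)).

Lemma BaddA : associative Badd.
Proof. by move=> u v w; apply: opE => f i /=; rewrite addrA. Qed.
Lemma BaddC : commutative Badd.
Proof. by move=> u v; apply: opE => f i /=; rewrite addrC. Qed.
Lemma Badd0 : left_id B0 Badd.
Proof. by move=> u; apply: opE => f i /=; rewrite add0r. Qed.
Lemma BaddN : left_inverse B0 Bopp Badd.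
Proof. by move=> u; apply: opE => f i /=; rewrite addNr. Qed.

HB.instance Definition _ := GRing.isZmodule.Build Bt BaddA BaddC Badd0 BaddN.

Definition Bone := MkB (bandM h0 a 1).
Definition Bmul (u v : Bt) := MkB (bandC (opP u) (opP v)).

Lemma Mop1 f : Mop h0 1 f = f.
Proof. by apply: funext => i; rewrite /Mop hornerC mul1r. Qed.

Lemma BmulA : associative Bmul.
Proof. by move=> u v w; apply: opE. Qed.
Lemma Bmul1 : left_id Bone Bmul.
Proof. by move=> u; apply: opE => f i /=; rewrite Mop1. Qed.
Lemma Bmul1r : right_id Bone Bmul.
Proof. by move=> u; apply: opE => f i /=; rewrite Mop1. Qed.
Lemma BmulDl : left_distributive Bmul Badd.
Proof. by move=> u v w; apply: opE. Qed.
Lemma BmulDr : right_distributive Bmul Badd.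
Proof. by move=> u v w; apply: opE => f i /=; rewrite (band_add _ _ (opP u)). Qed.
Lemma Bone0 : Bone != 0.
Proof.
apply/eqP => /(congr1 (fun u => op u (@dlt k 0) 0)) /=.
rewrite /Mop hornerC mul1r /dlt eqxx => /eqP; by rewrite oner_eq0.
Qed.

HB.instance Definition _ := GRing.Zmodule_isNzRing.Build Bt BmulA Bmul1 Bmul1r BmulDl BmulDr Bone0.

Definition Bscale (s : k) (u : Bt) := MkB (bandZ s (opP u)).

Lemma BscaleA s t u : Bscale s (Bscale t u) = Bscale (s * t) u.
Proof. by apply: opE => f i /=; rewrite mulrA. Qed.
Lemma Bscale1 : left_id 1 Bscale.
Proof. by move=> u; apply: opE => f i /=; rewrite mul1r. Qed.
Lemma BscaleDr : right_distributive Bscale +%R.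
Proof. by move=> s u v; apply: opE => f i /=; rewrite mulrDr. Qed.
Lemma BscaleDl v : {morph Bscale^~ v: s t / s + t}.
Proof. by move=> s t; apply: opE => f i /=; rewrite mulrDl. Qed.

HB.instance Definition _ := GRing.Zmodule_isLmodule.Build k Bt BscaleA Bscale1 BscaleDr BscaleDl.

Lemma BscaleAl (s : k) (u v : Bt) : s *: (u * v) = (s *: u) * v.
Proof. by apply: opE. Qed.
HB.instance Definition _ := GRing.Lmodule_isLalgebra.Build k Bt BscaleAl.

Lemma BscaleAr (s : k) (u v : Bt) : s *: (u * v) = u * (s *: v).
Proof. by apply: opE => f i /=; rewrite (band_scal _ _ (opP u)). Qed.
HB.instance Definition _ := GRing.Lalgebra_isAlgebra.Build k Bt BscaleAr.


Lemma opD (u v : Bt) f i : op (u + v) f i = op u f i + op v f i. Proof. by []. Qed.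
Lemma opN (u : Bt) f i : op (- u) f i = - op u f i. Proof. by []. Qed.
Lemma opZ (s : k) (u : Bt) f i : op (s *: u) f i = s * op u f i. Proof. by []. Qed.
Lemma opMul (u v : Bt) f : op (u * v) f = op u (op v f). Proof. by []. Qed.
Lemma op1 f i : op (1 : Bt) f i = f i. Proof. by rewrite /= /Mop hornerC mul1r. Qed.
Lemma op0 f i : op (0 : Bt) f i = 0. Proof. by []. Qed.

Definition hB := MkB (bandM h0 a 'X).
Definition xB := MkB (bandX h0 a).
Definition yB := MkB (bandY h0 a).
Definition Mb p := MkB (bandM h0 a p).

Lemma polyA_Mb p : polyA hB p = Mb p.
Proof.
elim/poly_ind: p => [|p c IH].
  rewrite /polyA rmorph0; apply: opE => f i; by rewrite op0 /= /Mop horner0 mul0r.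
rewrite /polyA rmorphD rmorphM /= horner_algX horner_algC -/(polyA hB p) IH.
apply: opE => f i; rewrite opD opMul opZ op1 /= /Mop.
by rewrite hornerD hornerMX hornerC hornerX /pt; ring.
Qed.

Lemma gwa_B : gwa_rel h0 a hB xB yB.
Proof.
split.
- rewrite polyA_Mb; apply: opE => f i; rewrite opMul /= /Mop /Xop /Yop.
  by rewrite addrK.
- rewrite polyA_Mb; apply: opE => f i; rewrite opMul /= /Mop /Xop /Yop.
  rewrite subrK /sigma_h horner_comp hornerXsubC -[i - 1]/(i + -1) ptD.
  by rewrite rmorphN1 mulN1r.
- move=> r; rewrite !polyA_Mb; apply: opE => f i; rewrite !opMul /= /Mop /Xop.
  rewrite /sigma_h horner_comp hornerXsubC -[i - 1]/(i + -1) ptD.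
  by rewrite rmorphN1 mulN1r.
- move=> r; rewrite !polyA_Mb; apply: opE => f i; rewrite !opMul /= /Mop /Yop.
  rewrite /sigma_h horner_comp hornerXsubC ptD mul1r addrK; ring.
Qed.

End BAlg.

Section Trace.
Variable k : fieldType.
Variable h0 : k.
Variable a : {poly k}.
Hypothesis Hc : [pchar k] =i pred0.
Hypothesis Hh0 : h0 != 0.
Hypothesis Ha : (3 < size a)%N.
Local Notation B := (Bt h0 a).
Local Notation L := (Lmap Hc Hh0 a).

Lemma band_diag (u : B) : exists p : {poly k}, forall i, p.[pt h0 i] = op u (@dlt k i) i.
Proof.
case: (opP u) => D [c [uD zD HT _]]; exists (c 0) => i.
by rewrite (band_kernel uD zD HT) subrr.
Qed.

Definition dg (u : B) := projT1 (cid (band_diag u)).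
Lemma dgP u i : (dg u).[pt h0 i] = op u (@dlt k i) i.
Proof. exact: (projT2 (cid (band_diag u))). Qed.

Lemma dg_uniq u p : (forall i, p.[pt h0 i] = op u (@dlt k i) i) -> dg u = p.
Proof.
move=> H; apply/eqP; rewrite -subr_eq0; apply/eqP.
apply: (@poly_pts0 _ Hc h0) => // n.
by rewrite hornerD hornerN -[n%:R]/((n%:Z)%:~R) -/(pt h0 _) dgP H subrr.
Qed.

Definition tau (u : B) := L (dg u).

Lemma tauD u v : tau (u + v) = tau u + tau v.
Proof.
have E : dg (u + v) = dg u + dg v by apply: dg_uniq => i; rewrite hornerD !dgP.
by rewrite /tau E LD.
Qed.

Lemma tauZ s u : tau (s *: u) = s * tau u.
Proof.
have E : dg (s *: u) = s *: dg u by apply: dg_uniq => i; rewrite hornerZ !dgP.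
by rewrite /tau E LZ.
Qed.

Lemma tauB u v : tau (u - v) = tau u - tau v.
Proof. by rewrite tauD -scaleN1r tauZ mulN1r. Qed.

Lemma tau_Mb p : tau (Mb h0 a p) = L p.
Proof.
have E : dg (Mb h0 a p) = p by apply: dg_uniq => i; rewrite /= /Mop /dlt eqxx mulr1.
by rewrite /tau E.
Qed.

Lemma opX m f i : op (xB h0 a ^+ m) f i = f (i - m%:Z).
Proof.
elim: m f i => [|m IH] f i; first by rewrite expr0 op1 subr0.
by rewrite exprS opMul /= /Xop IH -addrA -opprD -intS.
Qed.

Fixpoint um (m : nat) : {poly k} :=
  if m is m'.+1 then a * shz h0 (-1) (um m') else 1.

Lemma opY m f i : op (yB h0 a ^+ m) f i = (um m).[pt h0 i] * f (i + m%:Z).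
Proof.
elim: m f i => [|m IH] f i; first by rewrite expr0 op1 addr0 hornerC mul1r.
rewrite exprS opMul /= /Yop IH hornerM horner_shzN mulrA -addrA -intS.
by rewrite addrC.
Qed.

Lemma um_dvd m (l : nat) : (l < m)%N -> a %| shz h0 l%:Z (um m).
Proof.
elim: m l => [|m IH] l //= lm.
rewrite shzM shzA; case: l lm => [|l] lm.
  by rewrite shz0 dvdp_mulr ?dvdpp.
apply: dvdp_mull; rewrite intS addrC addKr; exact: IH.
Qed.

Lemma tau_X m (C : B) : tau (xB h0 a ^+ m * C) = tau (C * xB h0 a ^+ m).
Proof.
case: (opP C) => D [c [uD zD HT dT]].
have K := band_kernel uD zD HT.
have E1 : dg (xB h0 a ^+ m * C) = shz h0 m%:Z (c m%:Z).
  apply: dg_uniq => i; rewrite opMul opX K shz_eval /pt.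
  rewrite (_ : i - (i - m%:Z) = m%:Z); last by rewrite opprB addrC subrK.
  by rewrite intrB mulrBl.
have E2 : dg (C * xB h0 a ^+ m) = c m%:Z.
  apply: dg_uniq => i; rewrite opMul.
  have -> : op (xB h0 a ^+ m) (@dlt k i) = @dlt k (i + m%:Z).
    apply: funext => j; rewrite opX /dlt.
    have -> : (j - m%:Z == i) = (j == i + m%:Z).
      by apply/eqP/eqP => [<-|->]; [rewrite subrK | rewrite addrK].
    done.
  by rewrite K addrC addKr.
by rewrite /tau E1 E2 L_shift // => l lm; apply: dT => //.
Qed.

Lemma tau_Y m (C : B) : tau (yB h0 a ^+ m * C) = tau (C * yB h0 a ^+ m).
Proof.
case: (opP C) => D [c [uD zD HT dT]].
have K := band_kernel uD zD HT.
set G := um m * shz h0 (- m%:Z) (c (- m%:Z)).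
have E1 : dg (yB h0 a ^+ m * C) = G.
  apply: dg_uniq => i; rewrite opMul opY K /G hornerM horner_shzN.
  by rewrite opprD addrA subrr add0r.
have E2 : dg (C * yB h0 a ^+ m) = shz h0 m%:Z G.
  apply: dg_uniq => i; rewrite opMul.
  have -> : op (yB h0 a ^+ m) (@dlt k i) =
      (fun j => (um m).[pt h0 (i - m%:Z)] * @dlt k (i - m%:Z) j).
    apply: funext => j; rewrite opY /dlt.
    case: (eqVneq j (i - m%:Z)) => [->|ne]; first by rewrite subrK eqxx.
    have /negbTE -> : j + m%:Z != i by apply: contra ne => /eqP <-; rewrite addrK.
    by rewrite !mulr0.
  rewrite (band_scal _ _ (opP C)) K shz_eval.
  have -> : pt h0 i - (m%:Z)%:~R * h0 = pt h0 (i - m%:Z) by rewrite /pt intrB mulrBl.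
  rewrite /G hornerM horner_shzN subrK.
  by rewrite (_ : i - m%:Z - i = - m%:Z) // addrC addKr.
rewrite /tau E1 E2 L_shift // => l lm.
by rewrite /G shzM dvdp_mulr // um_dvd.
Qed.


Lemma tau0 : tau 0 = 0.
Proof. by rewrite -(scale0r (0 : B)) tauZ mul0r. Qed.

Lemma tau_sum (I : Type) (r : seq I) (F : I -> B) :
  tau (\sum_(x <- r) F x) = \sum_(x <- r) tau (F x).
Proof. exact: (big_morph _ tauD tau0). Qed.

Section PsiB.
Variable w : k.
Hypothesis w0 : w != 0.

Definition Psib (u : B) : B := MkB (bandPsi w0 (opP u)).

Lemma wK (i : int) : w ^ i * w ^ (- i) = 1.
Proof. by rewrite -expfzDr // subrr expr0z. Qed.
Lemma wK' (i : int) : w ^ (- i) * w ^ i = 1.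
Proof. by rewrite -expfzDr // addNr expr0z. Qed.

Lemma Psib_hom : alg_hom Psib.
Proof.
split.
- by apply: opE => f i; rewrite /= /Psi /Mop !hornerC !mul1r mulrA (wK i) mul1r.
- by move=> u v; apply: opE => f i; rewrite /= /Psi mulrDr.
- move=> u v; apply: opE => f i; rewrite opMul /= /Psi; congr (_ * _).
  congr (op u _ i); apply: funext => j; by rewrite mulrA (wK' j) mul1r.
- by move=> c u; apply: opE => f i; rewrite /= /Psi mulrCA.
Qed.

Lemma Psib_h : Psib (hB h0 a) = hB h0 a.
Proof. by apply: opE => f i; rewrite /= /Psi /Mop mulrCA (mulrA (w ^ i)) (wK i) mul1r. Qed.

Lemma Psib_x : Psib (xB h0 a) = w *: xB h0 a.
Proof.
apply: opE => f i; rewrite opZ /= /Psi /Xop mulrA.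
by rewrite -expfzDr // opprB addrC subrK expr1z.
Qed.

Lemma Psib_y : Psib (yB h0 a) = w^-1 *: yB h0 a.
Proof.
apply: opE => f i; rewrite opZ /= /Psi /Yop mulrCA (mulrA (w ^ i)).
rewrite -expfzDr // opprD addrA subrr add0r exprN1; ring.
Qed.

Lemma tau_Psib u : tau (Psib u) = tau u.
Proof.
have E : dg (Psib u) = dg u.
  apply: dg_uniq => i; rewrite dgP /= /Psi.
  have -> : (fun j => w ^ (- j) * @dlt k i j) = (fun j => w ^ (- i) * @dlt k i j).
    apply: funext => j; rewrite /dlt; case: eqP => [->|_] //; by rewrite !mulr0.
  by rewrite (band_scal _ _ (opP u)) mulrA (wK i) mul1r.
by rewrite /tau E.
Qed.

End PsiB.

End Trace.

Section AlgHom.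
Variable k : fieldType.

Lemma ah0 (A B : algType k) (f : A -> B) : alg_hom f -> f 0 = 0.
Proof.
case=> _ fD _ _; have := fD 0 0; rewrite addr0 => /eqP.
by rewrite -subr_eq subrr eq_sym => /eqP.
Qed.

Lemma ahB (A B : algType k) (f : A -> B) u v : alg_hom f -> f (u - v) = f u - f v.
Proof.
move=> hf; have [_ fD _ _] := hf.
by apply/eqP; rewrite eq_sym subr_eq -fD subrK.
Qed.

Lemma ahX (A B : algType k) (f : A -> B) u m : alg_hom f -> f (u ^+ m) = f u ^+ m.
Proof.
case=> f1 _ fM _; elim: m => [|m IH]; first by rewrite !expr0.
by rewrite !exprS fM IH.
Qed.

Lemma ah_polyA (A B : algType k) (f : A -> B) (hA : A) p : alg_hom f ->
  f (polyA hA p) = polyA (f hA) p.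
Proof.
move=> hf; have [f1 fD fM fZ] := hf.
elim/poly_ind: p => [|p c IH]; first by rewrite /polyA !rmorph0 ah0.
rewrite /polyA !rmorphD !rmorphM /= !horner_algX !horner_algC.
by rewrite fD fM -!/(polyA _ _) IH /GRing.scale /= fZ f1.
Qed.

Lemma ah_comp (A B C : algType k) (f : B -> C) (g : A -> B) :
  alg_hom f -> alg_hom g -> alg_hom (f \o g).
Proof.
case=> f1 fD fM fZ [g1 gD gM gZ]; split => /=.
- by rewrite g1 f1.
- by move=> u v; rewrite gD fD.
- by move=> u v; rewrite gM fM.
- by move=> c u; rewrite gZ fZ.
Qed.

Lemma ah_sum (A B : algType k) (f : A -> B) N (F : 'I_N -> A) : alg_hom f ->
  f (\sum_(i < N) F i) = \sum_(i < N) f (F i).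
Proof.
move=> hf; have [_ fD _ _] := hf.
elim: N F => [|N IH] F; first by rewrite !big_ord0 ah0.
by rewrite !big_ord_recr fD IH.
Qed.

End AlgHom.

Unset Implicit Arguments.

Theorem mainTheorem7 (k : fieldType) (Hchar : [pchar k] =i pred0)
  (h0 : k) (Hh0 : h0 != 0) (a : {poly k}) (n : nat)
  (Hn : (size a).-1 = n) (Hn2 : (2 < n)%N) (rho : k)
  (Hrefl : a \Po (rho%:P - 'X) = (-1) ^+ n *: a)
  (A : algType k) (hA xA yA : A) (HA : is_gwa h0 a hA xA yA)
  (Omega : A -> A) (HOm : alg_hom Omega) (HObij : bijective Omega)
  (HOx : Omega xA = yA) (HOy : Omega yA = (-1) ^+ n *: xA)
  (HOh : Omega hA = polyA hA ((h0 + rho)%:P - 'X)) :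
  ~ (exists g : A -> A, in_gen_group (gwa_gen hA xA yA) g /\ g =1 Omega).
Proof.
move=> [g [Hg gO]].
have Ha : (3 < size a)%N by move: Hn2; rewrite -Hn; case: (size a) => [|[|[|[|m]]]].
have [[f [fh fhA fxA fyA]] funiq] := HA.2 (Bt h0 a) (hB h0 a) (xB h0 a) (yB h0 a) (gwa_B h0 a).
have [f1 fD fM fZ] := fh.
pose Phi := fun b => tau Hchar Hh0 (a:=a) (f b).
have exp_inv : forall (u : A) lam s,
    (forall C, tau Hchar Hh0 (a:=a) (f u * C) = tau Hchar Hh0 (a:=a) (C * f u)) ->
    is_exp_ad lam u s -> forall b, Phi (s b) = Phi b.
  move=> u lam s Hu He b; have [N [HN ->]] := He b.
  case: N HN => [|N] HN.
    by rewrite big_ord0; move: HN => /= ->.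
  rewrite big_ord_recl /Phi fD (tauD Hchar Hh0 Ha) ah_sum //.
  rewrite (big_morph _ (tauD Hchar Hh0 Ha) (tau0 Hchar Hh0 Ha)) big1 ?addr0.
    by rewrite /= expr0 fact0 mulr1n divr1 scale1r.
  move=> i _; rewrite fZ (tauZ Hchar Hh0 Ha) lift0 /= /ad (ahB _ _ fh) !fM.
  by rewrite (tauB Hchar Hh0 Ha) Hu subrr mulr0.
have gen_inv : forall s, gwa_gen hA xA yA s -> forall b, Phi (s b) = Phi b.
  move=> s [[w [w0 hs sx sy sh]] | [lam [m [m0 [He|He]]]]].
  - have E : f \o s =1 Psib w0 \o f.
      apply: funiq.
      + exact: ah_comp.
      + apply: ah_comp => //; exact: Psib_hom.
      + by rewrite /= sh fhA Psib_h.
      + by rewrite /= sx fZ fxA Psib_x.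
      + by rewrite /= sy fZ fyA Psib_y.
    by move=> b; rewrite /Phi -[f (s b)]/((f \o s) b) E /= tau_Psib.
  - apply: (exp_inv _ lam) He => C; rewrite ahX // fxA; exact: (tau_X Hchar Hh0 Ha).
  - apply: (exp_inv _ lam) He => C; rewrite ahX // fyA; exact: (tau_Y Hchar Hh0 Ha).
have Ginv : forall g0, in_gen_group (gwa_gen hA xA yA) g0 -> forall b, Phi (g0 b) = Phi b.
  move=> g0; elim => [|s g1 Hs _ IH|s s' g1 Hs c1 c2 _ IH] b //=.
    by rewrite gen_inv.
  by rewrite -(gen_inv _ Hs (s' (g1 b))) c2 IH.
have := Ginv g Hg hA; rewrite gO /Phi HOh ah_polyA // fhA polyA_Mb tau_Mb.
rewrite (_ : tau Hchar Hh0 (a:=a) (hB h0 a) = Lmap Hchar Hh0 a 'X); last exact: tau_Mb.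
rewrite (LB Hchar Hh0 Ha) -alg_polyC (LZ Hchar Hh0 Ha) (L1 Hchar Hh0 Ha) mulr0 sub0r => /eqP.
rewrite eq_sym -addr_eq0 -mulr2n -mulr_natl mulf_eq0 => /orP [].
  by apply/negP; apply: (natr_neq0 Hchar).
by apply/negP; exact: (LX Hchar Hh0 Ha).
Qed.
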